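(* Let $n\in\mathbb{N}$ and $\varepsilon\in(0,1]$. In the cumulative dual access model, any testing algorithm for uniformity over $[n]$ (i.e., for the property $\mathcal{P}=\{\mathcal{U}_n\}$, where $\mathcal{U}_n$ is the uniform distribution on $[n]$) with distance parameter $\varepsilon$ must have sample (query) complexity $\Omega(1/\varepsilon)$.
   Context: Distributions are over $[n]=\{1,\dots,n\}$. The total variation distance is $d_{TV}(D_1,D_2)=\frac12\sum_{i\in[n]}|D_1(i)-D_2(i)|$, and $d_{TV}(D,\mathcal{P})=\min_{D'\in\mathcal{P}}d_{TV}(D,D')$. In the cumulative dual access model, an algorithm accesses an unknown distribution $D$ via two oracles: a sampling oracle $\mathsf{SAMP}_D$ that returns $i\in[n]$ with probability $D(i)$, independently of all previous calls, and a cumulative evaluation oracle $\mathsf{CEVAL}_D$ that on query $j\in[n]$ returns $D([j])=\sum_{i=1}^j D(i)$. Each call to either oracle counts as one query. A $q$-query testing algorithm for $\mathcal{P}$ takes $n$, $\varepsilon\in(0,1]$ and oracle access to $D$, makes at most $q(\varepsilon,n)$ oracle calls, and outputs ACCEPT with probability at least $2/3$ if $D\in\mathcal{P}$ and REJECT with probability at least $2/3$ if $d_{TV}(D,\mathcal{P})\ge\varepsilon$. *)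

(* Defs.v *)
From HB Require Import structures.
From mathcomp Require Import all_boot all_order all_algebra.
From mathcomp Require Import reals.
Set Implicit Arguments. Unset Strict Implicit. Unset Printing Implicit Defensive.
Import Order.TTheory GRing.Theory Num.Theory.
Local Open Scope ring_scope.

(* A distribution over [n] = {1..n}, encoded on 'I_n = {0..n-1}
   (element i : 'I_n stands for i+1). *)
Definition is_distr (R : realType) (n : nat) (D : 'I_n -> R) : Prop :=
  (forall i, 0 <= D i) /\ \sum_(i < n) D i = 1.

Definition uniform (R : realType) (n : nat) : 'I_n -> R := fun _ => n%:R^-1.

Definition dTV (R : realType) (n : nat) (D1 D2 : 'I_n -> R) : R :=
  2^-1 * \sum_(i < n) `|D1 i - D2 i|.

Definition cdf (R : realType) (n : nat) (D : 'I_n -> R) (j : 'I_n) : R :=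
  \sum_(i < n | (i <= j)%N) D i.

(* A randomized adaptive algorithm in the cumulative dual access model,
   as a (possibly infinitely branching) decision tree:
   - Out b      : stop and output ACCEPT (b = true) or REJECT (b = false);
   - Samp k     : call SAMP_D, receive i, continue with k i;
   - Ceval j k  : call CEVAL_D on j, receive D([j]) = r, continue with k r;
   - Coin p a b : internal randomness: with probability p continue with a,
                  otherwise with b (no oracle call). *)
Inductive alg (R : Type) (n : nat) : Type :=
| Out of bool
| Samp of ('I_n -> alg R n)
| Ceval of 'I_n & (R -> alg R n)
| Coin of R & alg R n & alg R n.

Arguments Out {R n}.

Fixpoint acc_prob (R : realType) (n : nat) (D : 'I_n -> R) (A : alg R n) : R :=
  match A with
  | Out b => if b then 1 else 0
  | Samp k => \sum_(i < n) D i * acc_prob D (k i)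
  | Ceval j k => acc_prob D (k (cdf D j))
  | Coin p a b => p * acc_prob D a + (1 - p) * acc_prob D b
  end.

Inductive uses_at_most (R : realType) (n : nat) : alg R n -> nat -> Prop :=
| uam_out b q : uses_at_most (Out b) q
| uam_samp k q : (forall i, uses_at_most (k i) q) -> uses_at_most (Samp k) q.+1
| uam_ceval j k q : (forall r, uses_at_most (k r) q) -> uses_at_most (Ceval j k) q.+1
| uam_coin p a b q : 0 <= p <= 1 -> uses_at_most a q -> uses_at_most b q ->
    uses_at_most (Coin p a b) q.

(* A is a testing algorithm for uniformity over [n] with distance
   parameter eps: P = {U_n}; d_TV(D, P) = d_TV(D, U_n). *)
Definition uniformity_tester (R : realType) (n : nat) (eps : R) (A : alg R n) : Prop :=
  forall D : 'I_n -> R, is_distr D ->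
    ((D =1 @uniform R n) -> 2 / 3 <= acc_prob D A) /\
    (eps <= dTV D (@uniform R n) -> acc_prob D A <= 1 / 3).

(* Main.v *)
Require Import Defs.
From HB Require Import structures.
From mathcomp Require Import all_boot all_order all_algebra.
From mathcomp Require Import reals lra ring zify.
Import Order.TTheory GRing.Theory Num.Theory.
Local Open Scope ring_scope.

Section S.
Variable R : realType.

Fixpoint touch {n : nat} (E : 'I_n -> R) (B : pred 'I_n) (A : alg R n) : R :=
  match A with
  | Out _ => 0
  | Samp k => \sum_(i < n) E i * (if B i then 1 else touch E B (k i))
  | Ceval j k => if B j then 1 else touch E B (k (cdf E j))
  | Coin p a b => p * touch E B a + (1 - p) * touch E B b
  end.

Lemma acc_bnd n (D : 'I_n -> R) A q : (forall i, 0 <= D i) -> \sum_i D i = 1 ->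
  uses_at_most A q -> 0 <= acc_prob D A <= 1.
Proof.
move=> D0 D1; elim=> {A q} /=.
- by case=> //=; rewrite lexx ler01.
- move=> k q _ IH; apply/andP; split.
    by apply: sumr_ge0 => i _; apply: mulr_ge0 => //; case/andP: (IH i).
  rewrite -D1; apply: ler_sum => i _; rewrite -[leRHS]mulr1.
  by apply: ler_wpM2l => //; case/andP: (IH i).
- by move=> j k q _ IH.
- move=> p a b q /andP[p0 p1] _ /andP[a0 a1] _ /andP[b0 b1].
  apply/andP; split; nra.
Qed.

Arguments acc_bnd {n D A q}.

Lemma touch_ge0 n (E : 'I_n -> R) B A q : (forall i, 0 <= E i) ->
  uses_at_most A q -> 0 <= touch E B A.
Proof.
move=> E0; elim=> {A q} /=.
- by [].
- move=> k q _ IH; apply: sumr_ge0 => i _; apply: mulr_ge0 => //; by case: (B i).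
- by move=> j k q _ IH; case: (B j).
- move=> p a b q /andP[p0 p1] _ a0 _ b0; nra.
Qed.

Lemma cdf_eq n (D E : 'I_n -> R) (B : pred 'I_n) (j : 'I_n) :
  (forall i, ~~ B i -> D i = E i) ->
  \sum_(i | B i) D i = \sum_(i | B i) E i ->
  (forall i, B i -> (i <= j)%N) \/ (forall i, B i -> ~~ (i <= j)%N) ->
  cdf D j = cdf E j.
Proof.
move=> DE SB [H|H]; rewrite /cdf.
- rewrite (bigID B) [in RHS](bigID B) /=.
  have -> : \sum_(i < n | (i <= j)%N && B i) D i = \sum_(i | B i) D i.
    by apply: eq_bigl => i; case Bi: (B i); rewrite ?andbF ?andbT // H.
  have -> : \sum_(i < n | (i <= j)%N && B i) E i = \sum_(i | B i) E i.
    by apply: eq_bigl => i; case Bi: (B i); rewrite ?andbF ?andbT // H.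
  rewrite SB; congr (_ + _); apply: eq_bigr => i /andP[_ Bi]; exact: DE.
- apply: eq_bigr => i ij; apply: DE; apply/negP => Bi.
  by move: (H i Bi); rewrite ij.
Qed.

Lemma coupling n (D E : 'I_n -> R) (B : pred 'I_n) A q :
  (forall i, 0 <= D i) -> (forall i, 0 <= E i) ->
  \sum_i D i = 1 -> \sum_i E i = 1 ->
  (forall i, ~~ B i -> D i = E i) ->
  \sum_(i | B i) D i = \sum_(i | B i) E i ->
  (forall j, ~~ B j -> cdf D j = cdf E j) ->
  uses_at_most A q -> `|acc_prob D A - acc_prob E A| <= touch E B A.
Proof.
move=> D0 E0 D1 E1 DE SB CE HA; elim: HA => {A q} /=.
- by move=> b q; rewrite subrr normr0.
- move=> k q Hk IH.
  rewrite (bigID B) [X in _ - X](bigID B) [in leRHS](bigID B) /=.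
  set x := \sum_(i < n | B i) D i * acc_prob D (k i).
  set y := \sum_(i < n | B i) E i * acc_prob E (k i).
  set u := \sum_(i < n | ~~ B i) D i * acc_prob D (k i).
  set v := \sum_(i < n | ~~ B i) E i * acc_prob E (k i).
  have -> : \sum_(i < n | B i) E i * (if B i then 1 else touch E B (k i))
           = \sum_(i < n | B i) E i.
    by apply: eq_bigr => i ->; rewrite mulr1.
  have -> : \sum_(i < n | ~~ B i) E i * (if B i then 1 else touch E B (k i))
           = \sum_(i < n | ~~ B i) E i * touch E B (k i).
    by apply: eq_bigr => i /negbTE ->.
  have hx : 0 <= x <= \sum_(i < n | B i) E i.
    apply/andP; split.
      by apply: sumr_ge0 => i _; apply: mulr_ge0 => //; case/andP: (acc_bnd D0 D1 (Hk i)).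
    rewrite -SB; apply: ler_sum => i _; rewrite -[leRHS]mulr1.
    by apply: ler_wpM2l => //; case/andP: (acc_bnd D0 D1 (Hk i)).
  have hy : 0 <= y <= \sum_(i < n | B i) E i.
    apply/andP; split.
      by apply: sumr_ge0 => i _; apply: mulr_ge0 => //; case/andP: (acc_bnd E0 E1 (Hk i)).
    apply: ler_sum => i _; rewrite -[leRHS]mulr1.
    by apply: ler_wpM2l => //; case/andP: (acc_bnd E0 E1 (Hk i)).
  have huv : `|u - v| <= \sum_(i < n | ~~ B i) E i * touch E B (k i).
    rewrite /u /v -sumrB; apply: le_trans (ler_norm_sum _ _ _) _.
    apply: ler_sum => i Bi; rewrite DE // -mulrBr normrM ger0_norm //.
    by apply: ler_wpM2l => //; apply: IH.
  have -> : x + u - (y + v) = (x - y) + (u - v) by ring.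
  apply: le_trans (ler_normD _ _) _; apply: lerD => //.
  rewrite ler_norml; case/andP: hx => ? ?; case/andP: hy => ? ?.
  apply/andP; split; lra.
- move=> j k q Hk IH; case Bj: (B j).
    case/andP: (acc_bnd D0 D1 (Hk (cdf D j))) => ? ?.
    case/andP: (acc_bnd E0 E1 (Hk (cdf E j))) => ? ?.
    rewrite ler_norml; apply/andP; split; lra.
  by rewrite CE ?Bj //; apply: IH.
- move=> p a b q /andP[p0 p1] _ Ha _ Hb.
  have -> : p * acc_prob D a + (1 - p) * acc_prob D b -
     (p * acc_prob E a + (1 - p) * acc_prob E b) =
     p * (acc_prob D a - acc_prob E a) + (1 - p) * (acc_prob D b - acc_prob E b) by ring.
  have p1' : 0 <= 1 - p by lra.
  apply: le_trans (ler_normD _ _) _; rewrite !normrM (ger0_norm p0) (ger0_norm p1').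
  by apply: lerD; apply: ler_wpM2l.
Qed.


Lemma sum_if_le M (B : 'I_M -> bool) (x : 'I_M -> R) :
  (forall r, 0 <= x r) -> (forall r1 r2, B r1 -> B r2 -> r1 = r2) ->
  \sum_r (if B r then 1 else x r) <= 1 + \sum_r x r.
Proof.
move=> x0 Bu; case: (pickP B) => [r0 Br0|none].
- rewrite (bigD1 r0) //= Br0 [in X in _ <= 1 + X](bigD1 r0) //=.
  have -> : \sum_(r < M | r != r0) (if B r then 1 else x r) = \sum_(r < M | r != r0) x r.
    apply: eq_bigr => r rr0; case Br: (B r) => //.
    by move: rr0; rewrite (Bu _ _ Br Br0) eqxx.
  have := x0 r0; lra.
- rewrite (eq_bigr x) => [|r _]; last by rewrite none.
  lra.
Qed.

Lemma touch_sum n M (E : 'I_n -> R) (B : 'I_M -> pred 'I_n) A q :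
  (forall i, 0 <= E i) -> \sum_i E i = 1 ->
  (forall i r1 r2, B r1 i -> B r2 i -> r1 = r2) ->
  uses_at_most A q -> \sum_r touch E (B r) A <= q%:R.
Proof.
move=> E0 E1 Bu; elim=> {A q} /=.
- by move=> b q; rewrite big1 // => r _.
- move=> k q Hk IH.
  rewrite exchange_big /=.
  apply: (@le_trans _ _ (\sum_(i < n) E i * (1 + q%:R))).
    apply: ler_sum => i _; rewrite -mulr_sumr; apply: ler_wpM2l => //.
    apply: le_trans (@sum_if_le M (fun r => B r i) (fun r => touch E (B r) (k i)) _ _) _.
    - by move=> r; apply: touch_ge0 (Hk i).
    - by move=> r1 r2; apply: Bu.
    by rewrite lerD2l; apply: IH.
  by rewrite -mulr_suml E1 mul1r -natr1 addrC.
- move=> j k q Hk IH.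
  apply: le_trans (@sum_if_le M (fun r => B r j) (fun r => touch E (B r) (k (cdf E j))) _ _) _.
  - by move=> r; apply: touch_ge0 (Hk _).
  - by move=> r1 r2; apply: Bu.
  rewrite -natr1; have := IH (cdf E j); lra.
- move=> p a b q /andP[p0 p1] _ Ha _ Hb.
  rewrite big_split /= -!mulr_sumr.
  have := ler_wpM2l p0 Ha; have p1' : 0 <= 1 - p by lra.
  have := ler_wpM2l p1' Hb; lra.
Qed.


Lemma ind_sum n m p (c : R) : (m <= p <= n)%N ->
  \sum_(i < n) (if (m <= i < p)%N then c else 0) = (p - m)%:R * c.
Proof.
case/andP=> mp pn.
rewrite -(big_mkord xpredT (fun i => if (m <= i < p)%N then c else 0)).
rewrite (@big_cat_nat _ _ _ m 0 n) //=; last by apply: leq_trans pn.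
rewrite (@big_cat_nat _ _ _ p m n) //=.
rewrite [X in X + _]big_nat_cond big1; last first.
  by move=> i /andP[/andP[_ im] _]; rewrite leqNgt im.
rewrite [X in _ + (_ + X)]big_nat_cond [X in _ + (_ + X)]big1; last first.
  by move=> i /andP[/andP[hp _] _]; rewrite ltnNge hp andbF.
rewrite add0r addr0 (eq_big_nat _ _ (F2 := fun _ => c)); last by move=> i ->.
by rewrite sumr_const_nat mulr_natl.
Qed.

Definition ind n (m p : nat) (i : 'I_n) : R := if (m <= i < p)%N then n%:R^-1 else 0.
Definition hh n (a L : nat) (i : 'I_n) : R := ind n (a + L) (a + L + L) i - ind n a (a + L) i.
Definition Dblk n (a L : nat) (i : 'I_n) : R := n%:R^-1 + hh n a L i.
Definition Blk n (a L : nat) : pred 'I_n := fun i => (a <= i < a + L + L)%N.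

Lemma hh_out n a L i : ~~ Blk n a L i -> hh n a L i = 0.
Proof.
rewrite /Blk /hh /ind => H; case: ifP; case: ifP => h1 h2; rewrite ?subrr ?subr0 //; exfalso; move: H h1 h2; lia.
Qed.

Lemma sum_hh n a L : (a + L + L <= n)%N -> \sum_i hh n a L i = 0.
Proof.
move=> H; rewrite /hh sumrB /ind !ind_sum; last 2 first.
  by apply/andP; split; lia.
  by apply/andP; split; lia.
have -> : (a + L + L - (a + L) = L)%N by lia.
have -> : (a + L - a = L)%N by lia.
by rewrite subrr.
Qed.

Lemma sum_abs_hh n a L : (a + L + L <= n)%N ->
  \sum_i `|hh n a L i| = (L + L)%:R * n%:R^-1.
Proof.
move=> H.
have -> : \sum_i `|hh n a L i| = \sum_i (ind n (a + L) (a + L + L) i + ind n a (a + L) i).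
  apply: eq_bigr => i _; rewrite /hh /ind.
  case: ifP; case: ifP => h1 h2; try (move: h1 h2; lia).
  - by rewrite subr0 ger0_norm ?addr0 // invr_ge0 ler0n.
  - by rewrite sub0r normrN ger0_norm ?add0r // invr_ge0 ler0n.
  - by rewrite subrr normr0 addr0.
rewrite big_split /= /ind !ind_sum; last 2 first.
  by apply/andP; split; lia.
  by apply/andP; split; lia.
have -> : (a + L + L - (a + L) = L)%N by lia.
have -> : (a + L - a = L)%N by lia.
by rewrite -mulrDl natrD.
Qed.


Lemma sum_unif n : (0 < n)%N -> \sum_(i < n) (n%:R^-1 : R) = 1.
Proof.
move=> n0; rewrite sumr_const card_ord -[_ *+ n]mulr_natl divff //.
by rewrite pnatr_eq0 -lt0n.
Qed.

Lemma Dblk_ok n a L : (0 < n)%N -> (a + L + L <= n)%N ->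
  [/\ forall i, 0 <= Dblk n a L i, \sum_i Dblk n a L i = 1,
      forall i, ~~ Blk n a L i -> Dblk n a L i = @uniform R n i,
      \sum_(i | Blk n a L i) Dblk n a L i = \sum_(i | Blk n a L i) @uniform R n i &
      dTV (Dblk n a L) (@uniform R n) = L%:R / n%:R].
Proof.
move=> n0 H.
have y0 : 0 <= (n%:R^-1 : R) by rewrite invr_ge0 ler0n.
split.
- move=> i; rewrite /Dblk /hh /ind; case: ifP; case: ifP => _ _; lra.
- by rewrite big_split /= sum_unif // sum_hh // addr0.
- by move=> i Hi; rewrite /Dblk hh_out // addr0.
- rewrite big_split /=; have := @sum_hh n a L H; rewrite (bigID (Blk n a L)) /=.
  rewrite [X in _ + X = _]big1 ?addr0; last by move=> i; apply: hh_out.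
  by move=> ->; rewrite addr0.
- rewrite /dTV.
  have -> : \sum_(i < n) `|Dblk n a L i - @uniform R n i| = \sum_i `|hh n a L i|.
    by apply: eq_bigr => i _; rewrite /Dblk /uniform addrAC subrr add0r.
  rewrite sum_abs_hh // natrD; field.
  by rewrite pnatr_eq0 -lt0n.
Qed.


Lemma main_lemma :
  exists c eps0 K : R,
    [/\ 0 < c, 0 < eps0, eps0 <= 1 & 0 < K] /\
    forall (n : nat) (eps : R) (q : nat) (A : alg R n),
      0 < eps -> eps <= eps0 -> K / eps <= n%:R ->
      uses_at_most A q -> uniformity_tester eps A ->
      c / eps <= q%:R.
Proof.
exists (1/24), (1/8), 1; split; first by split; lra.
move=> n eps q A e0 e1 hn HA HT.
have en : 1 <= eps * n%:R by move: hn; rewrite ler_pdivrMr // mulrC.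
have n0 : (0 < n)%N.
  by rewrite -(ltr0n R); apply: lt_le_trans (_ : 0 < 1/eps) hn; apply: divr_gt0.
set L := (Num.truncn (eps * n%:R)).+1.
have L1 : eps * n%:R < L%:R by apply: truncnS_gt.
have L2 : L%:R <= eps * n%:R + 1.
  rewrite /L -natr1 lerD2r truncn_le; apply: mulr_ge0; [lra|apply: ler0n].
have L0 : (0 < L + L)%N by rewrite /L addSn.
set M := (n %/ (L + L))%N.
have Mn : (M * (L + L) <= n)%N by apply: leq_divM.
have Mn2 : (n < M.+1 * (L + L))%N by apply: ltn_ceil.
pose a (r : 'I_M) := (r * (L + L))%N.
have aok : forall r : 'I_M, (a r + L + L <= n)%N.
  move=> r; apply: leq_trans Mn; by rewrite /a -addnA addnC -mulSn leq_mul2r ltn_ord orbT.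
pose B (r : 'I_M) := Blk n (a r) L.
have Bu : forall i r1 r2, B r1 i -> B r2 i -> r1 = r2.
  have aux : forall (x y : 'I_M) (i : nat), (a x <= i)%N -> (i < a y + L + L)%N -> (x <= y)%N.
    move=> x y i h1 h2.
    have : (x * (L + L) < y.+1 * (L + L))%N.
      by apply: leq_ltn_trans h1 _; rewrite mulSn addnC addnA.
    by rewrite ltn_mul2r L0 ltnS.
  move=> i r1 r2 /andP[h1 h2] /andP[h3 h4]; apply: val_inj => /=.
  by apply/eqP; rewrite eqn_leq (aux _ _ _ h1 h4) (aux _ _ _ h3 h2).
set U := @uniform R n.
have U0 : forall i, 0 <= U i by move=> i; rewrite /U /uniform invr_ge0 ler0n.
have U1 : \sum_i U i = 1 by apply: sum_unif.
have Mr : 1 <= 8 * eps * M%:R.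
  have h1 : n%:R < (M%:R + 1) * (L%:R + L%:R) :> R.
    by rewrite natr1 -natrD -natrM ltr_nat.
  have h2 : (M%:R + 1) * (L%:R + L%:R) <= (M%:R + 1) * (4 * eps * n%:R) :> R.
    apply: ler_wpM2l; first by apply: addr_ge0 => //; apply: ler0n.
    lra.
  have h3 : 0 < (n%:R : R) by rewrite ltr0n.
  have h4 : 1 < 4 * eps * (M%:R + 1).
    have h5 : n%:R * 1 < n%:R * (4 * eps * (M%:R + 1)) by lra.
    by rewrite ltr_pM2l in h5.
  lra.
have M0 : (0 < M)%N.
  rewrite -(ltr0n R); have : 0 <= eps * M%:R by apply: mulr_ge0; [lra|apply: ler0n].
  nra.
have [r Hr] : exists r : 'I_M, touch U (B r) A <= q%:R / M%:R.
  case: (pickP (fun r : 'I_M => touch U (B r) A <= q%:R / M%:R)) => [r Hr|none].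
    by exists r.
  exfalso; have hs := @touch_sum n M U B A q U0 U1 Bu HA.
  have : \sum_(r < M) (q%:R / M%:R) < \sum_r touch U (B r) A.
    apply: ltr_sum.
      by apply/hasP; exists (Ordinal M0); rewrite ?mem_index_enum.
    by move=> r _; rewrite ltNge none.
  rewrite sumr_const card_ord -[_ *+ M]mulr_natl mulrC divfK; first lra.
  by rewrite pnatr_eq0 -lt0n.
set D := Dblk n (a r) L.
case: (@Dblk_ok n (a r) L n0 (aok r)) => D0 D1 DU DS Dd.
have hU : 2/3 <= acc_prob U A by apply: (HT U (conj U0 U1)).1.
have hD : acc_prob D A <= 1/3.
  apply: (HT D (conj D0 D1)).2; rewrite Dd ler_pdivlMr ?ltr0n //; lra.
have CE : forall j, ~~ B r j -> cdf D j = cdf U j.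
  move=> j Hj; apply: cdf_eq DU DS _.
  rewrite /B /Blk in Hj *.
  case: (ltnP j (a r)) => hj; [right|left] => i /andP[h1 h2].
    apply/negP => h3; move: hj h1 h3; lia.
  move: Hj hj h2; lia.
have hc := @coupling n D U (B r) A q D0 U0 D1 U1 DU DS CE HA.
rewrite ler_norml in hc; case/andP: hc => hc1 hc2.
have h1 : 1/3 <= acc_prob U A - acc_prob D A.
  move: hU hD; clear; move=> hU hD; lra.
have h2 : acc_prob U A - acc_prob D A <= touch U (B r) A.
  by rewrite -opprB lerNl.
have h13 := le_trans h1 (le_trans h2 Hr).
rewrite ler_pdivlMr ?ltr0n // in h13.
rewrite ler_pdivrMr //.
have : 0 <= M%:R :> R by apply: ler0n.
nra.
Qed.

End S.

Theorem theorem4 (R : realType) :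
  exists c eps0 K : R,
    [/\ 0 < c, 0 < eps0, eps0 <= 1 & 0 < K] /\
    forall (n : nat) (eps : R) (q : nat) (A : alg R n),
      0 < eps -> eps <= eps0 -> K / eps <= n%:R ->
      uses_at_most A q -> uniformity_tester eps A ->
      c / eps <= q%:R.
Proof. exact: main_lemma. Qed.
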